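(* Let $G$ be an open localic groupoid, $X$ a principal $G$-bundle over a locale $M$ with bundle map $\pi:X\to M$, and $f:\tilde M\to M$ a map of locales. Then there exist a principal $G$-bundle $\tilde X$ over $\tilde M$ with bundle map $\tilde\pi:\tilde X\to\tilde M$ and an equivariant map $\tilde f:\tilde X\to X$ such that $\pi\circ\tilde f=f\circ\tilde\pi$. Moreover, for any principal $G$-bundle $X'$ over $\tilde M$ and any equivariant map $f':X'\to X$ (compatible with the bundle maps over $f$), there is a unique isomorphism of principal $G$-bundles $\varphi:X'\to\tilde X$ with $\tilde f\circ\varphi=f'$.
   Context: An open localic groupoid $G$ has locales $G_0,G_1$ with domain, range, unit, inverse, multiplication maps, $d$ open. A left $G$-locale is a locale $X$ with anchor $p:X\to G_0$ and associative unital action $a:G_1\times_{G_0}X\to X$ (pullback along $d$ and $p$) with $p\circ a=r\circ\pi_1$. An equivariant map between $G$-locales is a map commuting with anchors and actions. A principal $G$-bundle over a locale $M$ is a $G$-locale with a map $\pi:X\to M$ such that $\pi\circ a=\pi\circ\pi_2$, the pairing map $\langle a,\pi_2\rangle:G_1\times_{G_0}X\to X\times_MX$ is an isomorphism of locales, and $\pi$ is an open surjection. *)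

(* Defs.v *)
(* Locales are represented by their frames of opens;
   a locale map X -> Y is a frame homomorphism O(Y) -> O(X). *)
From Stdlib Require Import Setoid.
Set Implicit Arguments.
Unset Strict Implicit.

Record Frame := {
  fcar :> Type;
  fle : fcar -> fcar -> Prop;
  fmeet : fcar -> fcar -> fcar;
  ftop : fcar;
  fsup : (fcar -> Prop) -> fcar;
  fle_refl : forall a, fle a a;
  fle_trans : forall a b c, fle a b -> fle b c -> fle a c;
  fle_antisym : forall a b, fle a b -> fle b a -> a = b;
  fmeet_glb : forall a b c, fle c (fmeet a b) <-> (fle c a /\ fle c b);
  ftop_max : forall a, fle a ftop;
  fsup_lub : forall (S : fcar -> Prop) c, fle (fsup S) c <-> (forall s, S s -> fle s c);
  fdistr : forall a (S : fcar -> Prop),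
      fmeet a (fsup S) = fsup (fun y => exists s, S s /\ y = fmeet a s)
}.

Arguments fle {f}.
Arguments fmeet {f}.
Arguments ftop {f}.
Arguments fsup {f}.

Lemma fsup_ub (F : Frame) (S : F -> Prop) s : S s -> fle s (fsup S).
Proof. intro Hs. apply (proj1 (fsup_lub S (fsup S)) (fle_refl _)); exact Hs. Qed.

Lemma fsup_ext (F : Frame) (S T : F -> Prop) :
  (forall x, S x <-> T x) -> fsup S = fsup T.
Proof.
  intro H. apply fle_antisym; apply fsup_lub; intros s Hs;
  apply fsup_ub; apply H; exact Hs.
Qed.

Record LMap (X Y : Frame) := {
  lm :> Y -> X;
  lm_top : lm ftop = ftop;
  lm_meet : forall a b, lm (fmeet a b) = fmeet (lm a) (lm b);
  lm_sup : forall S : Y -> Prop,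
      lm (fsup S) = fsup (fun x => exists y, S y /\ x = lm y)
}.

Definition lid (X : Frame) : LMap X X.
Proof.
  refine {| lm := fun x => x |}; try reflexivity.
  intro S. apply fsup_ext. intro x; split.
  - intro H; exists x; split; [exact H | reflexivity].
  - intros [y [Hy ->]]; exact Hy.
Defined.

Definition lcomp (X Y Z : Frame) (g : LMap Y Z) (f : LMap X Y) : LMap X Z.
Proof.
  refine {| lm := fun z => f (g z) |}.
  - rewrite !lm_top; reflexivity.
  - intros a b; rewrite !lm_meet; reflexivity.
  - intro S. rewrite lm_sup, lm_sup. apply fsup_ext. intro x; split.
    + intros [y [[z [Hz ->]] ->]]. exists z; split; [exact Hz | reflexivity].
    + intros [z [Hz ->]]. exists (g z); split; [exists z; split; [exact Hz|reflexivity] | reflexivity].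
Defined.

Definition lmap_eq (X Y : Frame) (f g : LMap X Y) : Prop := forall y, f y = g y.

Definition is_iso (X Y : Frame) (f : LMap X Y) : Prop :=
  exists g : LMap Y X, lmap_eq (lcomp g f) (lid X) /\ lmap_eq (lcomp f g) (lid Y).

(* open map (Joyal--Tierney): f^* has a left adjoint f_! satisfying Frobenius *)
Definition is_open (X Y : Frame) (f : LMap X Y) : Prop :=
  exists fs : X -> Y,
    (forall a b, fle (fs a) b <-> fle a (f b)) /\
    (forall a b, fs (fmeet a (f b)) = fmeet (fs a) b).

Definition is_surj (X Y : Frame) (f : LMap X Y) : Prop :=
  forall a b, f a = f b -> a = b.

Definition is_open_surj (X Y : Frame) (f : LMap X Y) : Prop :=
  is_open f /\ is_surj f.

Definition is_pullback (X Y Z P : Frame) (f : LMap X Z) (g : LMap Y Z)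
    (p1 : LMap P X) (p2 : LMap P Y) : Prop :=
  lmap_eq (lcomp f p1) (lcomp g p2) /\
  forall (W : Frame) (a : LMap W X) (b : LMap W Y),
    lmap_eq (lcomp f a) (lcomp g b) ->
    (exists h : LMap W P, lmap_eq (lcomp p1 h) a /\ lmap_eq (lcomp p2 h) b) /\
    (forall h h' : LMap W P, lmap_eq (lcomp p1 h) (lcomp p1 h') ->
        lmap_eq (lcomp p2 h) (lcomp p2 h') -> lmap_eq h h').

(* G2 = G1 x_{G0} G1 is the pullback of d (first factor) and r (second
   factor): composable pairs (g,h) with d g = r h; gmul (g,h) = g h.
   The axioms are stated with generalized elements W -> G1. *)
Record OpenGroupoid := {
  G0 : Frame;
  G1 : Frame;
  gd : LMap G1 G0;
  gr : LMap G1 G0;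
  gu : LMap G0 G1;
  ginv : LMap G1 G1;
  G2 : Frame;
  gp1 : LMap G2 G1;
  gp2 : LMap G2 G1;
  G2_pb : is_pullback gd gr gp1 gp2;
  gmul : LMap G2 G1;
  gd_u : lmap_eq (lcomp gd gu) (lid G0);
  gr_u : lmap_eq (lcomp gr gu) (lid G0);
  gd_mul : lmap_eq (lcomp gd gmul) (lcomp gd gp2);
  gr_mul : lmap_eq (lcomp gr gmul) (lcomp gr gp1);
  gd_inv : lmap_eq (lcomp gd ginv) gr;
  gr_inv : lmap_eq (lcomp gr ginv) gd;
  gmul_unit_l : forall (W : Frame) (a : LMap W G1) (h : LMap W G2),
      lmap_eq (lcomp gp1 h) (lcomp gu (lcomp gr a)) ->
      lmap_eq (lcomp gp2 h) a -> lmap_eq (lcomp gmul h) a;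
  gmul_unit_r : forall (W : Frame) (a : LMap W G1) (h : LMap W G2),
      lmap_eq (lcomp gp1 h) a ->
      lmap_eq (lcomp gp2 h) (lcomp gu (lcomp gd a)) -> lmap_eq (lcomp gmul h) a;
  gmul_inv_l : forall (W : Frame) (a : LMap W G1) (h : LMap W G2),
      lmap_eq (lcomp gp1 h) (lcomp ginv a) -> lmap_eq (lcomp gp2 h) a ->
      lmap_eq (lcomp gmul h) (lcomp gu (lcomp gd a));
  gmul_inv_r : forall (W : Frame) (a : LMap W G1) (h : LMap W G2),
      lmap_eq (lcomp gp1 h) a -> lmap_eq (lcomp gp2 h) (lcomp ginv a) ->
      lmap_eq (lcomp gmul h) (lcomp gu (lcomp gr a));
  gmul_assoc : forall (W : Frame) (a b c : LMap W G1) (h1 h2 h3 h4 : LMap W G2),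
      lmap_eq (lcomp gp1 h1) a -> lmap_eq (lcomp gp2 h1) b ->
      lmap_eq (lcomp gp1 h2) (lcomp gmul h1) -> lmap_eq (lcomp gp2 h2) c ->
      lmap_eq (lcomp gp1 h3) b -> lmap_eq (lcomp gp2 h3) c ->
      lmap_eq (lcomp gp1 h4) a -> lmap_eq (lcomp gp2 h4) (lcomp gmul h3) ->
      lmap_eq (lcomp gmul h2) (lcomp gmul h4);
  gd_open : is_open gd
}.

Record GLocale (G : OpenGroupoid) := {
  gl_sp : Frame;
  anchor : LMap gl_sp (G0 G);
  adom : Frame;
  ap1 : LMap adom (G1 G);
  ap2 : LMap adom gl_sp;
  adom_pb : is_pullback (gd G) anchor ap1 ap2;
  act : LMap adom gl_sp;
  anchor_act : lmap_eq (lcomp anchor act) (lcomp (gr G) ap1);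
  act_unit : forall (W : Frame) (x : LMap W gl_sp) (h : LMap W adom),
      lmap_eq (lcomp ap1 h) (lcomp (gu G) (lcomp anchor x)) ->
      lmap_eq (lcomp ap2 h) x -> lmap_eq (lcomp act h) x;
  act_assoc : forall (W : Frame) (g k : LMap W (G1 G)) (x : LMap W gl_sp)
      (h1 h2 : LMap W adom) (h3 : LMap W (G2 G)) (h4 : LMap W adom),
      lmap_eq (lcomp ap1 h1) k -> lmap_eq (lcomp ap2 h1) x ->
      lmap_eq (lcomp ap1 h2) g -> lmap_eq (lcomp ap2 h2) (lcomp act h1) ->
      lmap_eq (lcomp (gp1 G) h3) g -> lmap_eq (lcomp (gp2 G) h3) k ->
      lmap_eq (lcomp ap1 h4) (lcomp (gmul G) h3) -> lmap_eq (lcomp ap2 h4) x ->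
      lmap_eq (lcomp act h2) (lcomp act h4)
}.

(* equivariant maps: commute with anchors and actions
   (phi o a_X = a_Y o (id x phi)) *)
Definition equivariant (G : OpenGroupoid) (X Y : GLocale G)
    (phi : LMap (gl_sp X) (gl_sp Y)) : Prop :=
  lmap_eq (lcomp (anchor Y) phi) (anchor X) /\
  forall k : LMap (adom X) (adom Y),
    lmap_eq (lcomp (ap1 Y) k) (ap1 X) ->
    lmap_eq (lcomp (ap2 Y) k) (lcomp phi (ap2 X)) ->
    lmap_eq (lcomp phi (act X)) (lcomp (act Y) k).

Record PrincipalBundle (G : OpenGroupoid) (M : Frame) := {
  pb_loc : GLocale G;
  pb_proj : LMap (gl_sp pb_loc) M;
  pb_inv : lmap_eq (lcomp pb_proj (act pb_loc)) (lcomp pb_proj (ap2 pb_loc));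
  (* the pairing map <a, pi_2> : G1 x_{G0} X -> X x_M X is an isomorphism
     (for any choice of the pullback X x_M X) *)
  pb_pair_iso : forall (P : Frame) (q1 q2 : LMap P (gl_sp pb_loc)),
      is_pullback pb_proj pb_proj q1 q2 ->
      exists c : LMap (adom pb_loc) P,
        lmap_eq (lcomp q1 c) (act pb_loc) /\ lmap_eq (lcomp q2 c) (ap2 pb_loc) /\
        is_iso c;
  pb_open_surj : is_open_surj pb_proj
}.

Definition pb_sp (G : OpenGroupoid) (M : Frame) (X : PrincipalBundle G M) : Frame :=
  gl_sp (pb_loc X).

(* Main.v *)
Require Import Defs.
From Stdlib Require Import FunctionalExtensionality PropExtensionality ProofIrrelevance ClassicalEpsilon.

Section FrameLemmas.
Context {F : Frame}.
Implicit Types a b c : F.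

Lemma meet_lb1 a b : fle (fmeet a b) a.
Proof. apply (proj1 (fmeet_glb a b (fmeet a b)) (fle_refl _)). Qed.
Lemma meet_lb2 a b : fle (fmeet a b) b.
Proof. apply (proj1 (fmeet_glb a b (fmeet a b)) (fle_refl _)). Qed.
Lemma meet_glb' a b c : fle c a -> fle c b -> fle c (fmeet a b).
Proof. intros; apply fmeet_glb; split; assumption. Qed.
Lemma meet_comm a b : fmeet a b = fmeet b a.
Proof. apply fle_antisym; apply meet_glb'; (apply meet_lb1 || apply meet_lb2). Qed.
Lemma meet_assoc a b c : fmeet (fmeet a b) c = fmeet a (fmeet b c).
Proof.
  apply fle_antisym; repeat apply meet_glb'.
  - eapply fle_trans; [apply meet_lb1|apply meet_lb1].
  - eapply fle_trans; [apply meet_lb1|apply meet_lb2].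
  - apply meet_lb2.
  - apply meet_lb1.
  - eapply fle_trans; [apply meet_lb2|apply meet_lb1].
  - eapply fle_trans; [apply meet_lb2|apply meet_lb2].
Qed.
Lemma le_meet a b : fle a b -> fmeet a b = a.
Proof. intro H. apply fle_antisym; [apply meet_lb1| apply meet_glb'; [apply fle_refl|exact H]]. Qed.
Lemma meet_le a b : fmeet a b = a -> fle a b.
Proof. intro H; rewrite <- H; apply meet_lb2. Qed.
Lemma meet_top a : fmeet a ftop = a.
Proof. apply le_meet, ftop_max. Qed.
Lemma top_meet a : fmeet ftop a = a.
Proof. rewrite meet_comm; apply meet_top. Qed.
Lemma meet_idem a : fmeet a a = a.
Proof. apply le_meet, fle_refl. Qed.
Lemma meet_mono a b c d : fle a c -> fle b d -> fle (fmeet a b) (fmeet c d).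
Proof. intros H1 H2; apply meet_glb'; [eapply fle_trans; [apply meet_lb1|exact H1] | eapply fle_trans; [apply meet_lb2|exact H2]]. Qed.
Lemma meet_rcomm a b c : fmeet (fmeet a b) c = fmeet (fmeet a c) b.
Proof. rewrite !meet_assoc, (meet_comm b c); reflexivity. Qed.
Lemma meet_lcomm a b c : fmeet a (fmeet b c) = fmeet b (fmeet a c).
Proof. rewrite <- !meet_assoc, (meet_comm a b); reflexivity. Qed.
Lemma fsup_le (S : F -> Prop) c : (forall s, S s -> fle s c) -> fle (fsup S) c.
Proof. apply fsup_lub. Qed.
Lemma fdistr_r a (S : F -> Prop) :
  fmeet (fsup S) a = fsup (fun y => exists s, S s /\ y = fmeet s a).
Proof.
  rewrite meet_comm, fdistr. apply fsup_ext; intro x; split;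
  intros [s [Hs ->]]; exists s; split; auto using meet_comm.
Qed.
Lemma meet_sup_le a (S : F -> Prop) c :
  (forall s, S s -> fle (fmeet a s) c) -> fle (fmeet a (fsup S)) c.
Proof. intro H; rewrite fdistr; apply fsup_le; intros y [s [Hs ->]]; auto. Qed.
Lemma sup_meet_le a (S : F -> Prop) c :
  (forall s, S s -> fle (fmeet s a) c) -> fle (fmeet (fsup S) a) c.
Proof. intro H; rewrite fdistr_r; apply fsup_le; intros y [s [Hs ->]]; auto. Qed.
Lemma fsup_mono (S T : F -> Prop) : (forall x, S x -> T x) -> fle (fsup S) (fsup T).
Proof. intro H; apply fsup_le; intros; apply fsup_ub; auto. Qed.
End FrameLemmas.



Section HomLemmas.
Variables X Y : Frame.
Variable f : LMap X Y.
Lemma lm_mono (a b : Y) : fle a b -> fle (f a) (f b).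
Proof. intro H. apply meet_le. rewrite <- lm_meet, le_meet; auto. Qed.
Lemma lm_bot (a : X) : fle (f (fsup (fun _ => False))) a.
Proof. rewrite lm_sup. apply fsup_le. intros s [y [[] _]]. Qed.
End HomLemmas.

Lemma lmap_ext (X Y : Frame) (f g : LMap X Y) : lmap_eq f g -> f = g.
Proof.
  intro H. destruct f as [f1 t1 m1 s1], g as [g1 t2 m2 s2]. unfold lmap_eq in H; simpl in H.
  assert (f1 = g1) by (apply functional_extensionality; exact H). subst g1.
  f_equal; apply proof_irrelevance.
Qed.

Section PBC.
Variables A B C : Frame.
Variable g : LMap A C.
Variable q : LMap B C.

Definition PT := (fcar A * fcar B)%type.

Record sat (D : PT -> Prop) : Prop := {
  sat_down : forall x y x' y', D (x,y) -> fle x' x -> fle y' y -> D (x',y');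
  sat_jl : forall (S : A -> Prop) y, (forall x, S x -> D (x,y)) -> D (fsup S, y);
  sat_jr : forall x (S : B -> Prop), (forall y, S y -> D (x,y)) -> D (x, fsup S);
  sat_r1 : forall x y c, D (fmeet x (g c), y) -> D (x, fmeet y (q c));
  sat_r2 : forall x y c, D (x, fmeet y (q c)) -> D (fmeet x (g c), y)
}.

Definition jc (S : PT -> Prop) : PT -> Prop :=
  fun z => forall D, sat D -> (forall w, S w -> D w) -> D z.

Lemma jc_sat S : sat (jc S).
Proof.
  constructor.
  - intros x y x' y' H Hx Hy D HD HS. apply (sat_down D HD x y); auto. apply H; auto.
  - intros Sx y H D HD HS. apply sat_jl; auto. intros x Hx; apply H; auto.
  - intros x Sy H D HD HS. apply sat_jr; auto. intros y Hy; apply H; auto.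
  - intros x y c H D HD HS. apply sat_r1; auto. apply H; auto.
  - intros x y c H D HD HS. apply sat_r2; auto. apply H; auto.
Qed.
Lemma jc_incl (S : PT -> Prop) w : S w -> jc S w.
Proof. intros H D _ HS; auto. Qed.
Lemma jc_min (S D : PT -> Prop) : sat D -> (forall w, S w -> D w) -> forall w, jc S w -> D w.
Proof. intros HD HS w H; apply H; auto. Qed.

Lemma sat_inter D E : sat D -> sat E -> sat (fun z => D z /\ E z).
Proof.
  intros HD HE; constructor.
  - intros x y x' y' [H1 H2] Hx Hy; split; eapply sat_down; eauto.
  - intros S y H; split; apply sat_jl; auto; intros x Hx; apply H; auto.
  - intros x S H; split; apply sat_jr; auto; intros y Hy; apply H; auto.
  - intros x y c [H1 H2]; split; apply sat_r1; auto.
  - intros x y c [H1 H2]; split; apply sat_r2; auto.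
Qed.
Lemma sat_full : sat (fun _ => True).
Proof. constructor; auto. Qed.

Definition dc (U : PT -> Prop) := forall x y x' y', U (x,y) -> fle x' x -> fle y' y -> U (x',y').

Definition pm (z w : PT) : PT := (fmeet (fst z) (fst w), fmeet (snd z) (snd w)).

Lemma pm_idem z : pm z z = z.
Proof. destruct z as [x y]; unfold pm; simpl; rewrite !meet_idem; reflexivity. Qed.
Lemma pm_comm z w : pm z w = pm w z.
Proof. destruct z, w; unfold pm; simpl; rewrite (meet_comm f), (meet_comm f0); reflexivity. Qed.

Lemma jmeet_l (S U V : PT -> Prop) : dc U ->
  (forall s t, S s -> U t -> jc V (pm s t)) ->
  forall s t, jc S s -> U t -> jc V (pm s t).
Proof.
  intros HU H s t Hs Ht.
  set (F := fun w => forall t, U t -> jc V (pm w t)).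
  assert (HF : sat F).
  { pose proof (jc_sat V) as HV. constructor.
    - intros x y x' y' Hw Hx Hy [t1 t2] Ht'. specialize (Hw _ Ht'). unfold pm in *; simpl in *.
      eapply sat_down; [exact HV|exact Hw| |]; apply meet_mono; auto using fle_refl.
    - intros Sx y Hw [t1 t2] Ht'. unfold pm; simpl. rewrite fdistr_r.
      apply sat_jl; auto. intros x [s' [Hs' ->]]. apply (Hw s' Hs' (t1,t2) Ht').
    - intros x Sy Hw [t1 t2] Ht'. unfold pm; simpl. rewrite fdistr_r.
      apply sat_jr; auto. intros y [s' [Hs' ->]]. apply (Hw s' Hs' (t1,t2) Ht').
    - intros x y c Hw [t1 t2] Ht'. specialize (Hw _ Ht'). unfold pm in *; simpl in *.
      rewrite meet_rcomm. apply sat_r1; auto. rewrite meet_rcomm; auto.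
    - intros x y c Hw [t1 t2] Ht'. specialize (Hw _ Ht'). unfold pm in *; simpl in *.
      rewrite meet_rcomm. apply sat_r2; auto. rewrite meet_rcomm; auto. }
  exact (jc_min S F HF (fun w Hw t Ht => H w t Hw Ht) s Hs t Ht).
Qed.

Lemma sat_dc D : sat D -> dc D.
Proof. intros HD x y x' y' H1 H2 H3; eapply sat_down; eauto. Qed.

Lemma jmeet2 (S T V : PT -> Prop) : dc T ->
  (forall s t, S s -> T t -> jc V (pm s t)) ->
  forall s t, jc S s -> jc T t -> jc V (pm s t).
Proof.
  intros HT H s t Hs Ht.
  assert (H1 : forall s t, jc S s -> T t -> jc V (pm s t)) by (apply jmeet_l; auto).
  rewrite pm_comm. apply (jmeet_l T (jc S) V); auto.
  - apply sat_dc, jc_sat.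
  - intros; rewrite pm_comm; auto.
Qed.

Definition PC := { D : PT -> Prop | sat D }.

Lemma PC_ext (D E : PC) : (forall z, proj1_sig D z <-> proj1_sig E z) -> D = E.
Proof.
  destruct D as [D HD], E as [E HE]; simpl; intro H.
  assert (D = E) by (apply functional_extensionality; intro z; apply propositional_extensionality; auto).
  subst; f_equal; apply proof_irrelevance.
Qed.

Definition Ple (D E : PC) : Prop := forall z, proj1_sig D z -> proj1_sig E z.
Definition Pmeet (D E : PC) : PC :=
  exist _ (fun z => proj1_sig D z /\ proj1_sig E z) (sat_inter _ _ (proj2_sig D) (proj2_sig E)).
Definition Ptop : PC := exist _ (fun _ => True) sat_full.
Definition Punion (S : PC -> Prop) : PT -> Prop := fun z => exists D, S D /\ proj1_sig D z.
Definition Psup (S : PC -> Prop) : PC := exist _ (jc (Punion S)) (jc_sat _).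

Definition PBF : Frame.
Proof.
  refine {| fcar := PC; fle := Ple; fmeet := Pmeet; ftop := Ptop; fsup := Psup |}.
  - intros a z; auto.
  - intros a b c H1 H2 z Hz; auto.
  - intros a b H1 H2; apply PC_ext; intro z; split; auto.
  - intros a b c; split.
    + intro H; split; intros z Hz; destruct (H z Hz); auto.
    + intros [H1 H2] z Hz; split; auto.
  - intros a z _; exact I.
  - intros S c; split.
    + intros H s Hs z Hz; apply H, jc_incl; exists s; auto.
    + intros H z Hz. apply (jc_min (Punion S) _ (proj2_sig c)) with (w := z); auto.
      intros w [D [HD Hw]]. apply (H D HD); auto.
  - intros a S. apply PC_ext; intro z; simpl; split.
    + intros [Ha Hj]. rewrite <- (pm_idem z).
      apply (jmeet_l (Punion S) (proj1_sig a)); auto.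
      * apply sat_dc, (proj2_sig a).
      * intros s t [D [HD Hs]] Ht. apply jc_incl. exists (Pmeet a D). split.
        -- exists D; split; auto.
        -- simpl; split.
           ++ destruct s as [s1 s2], t as [t1 t2]; unfold pm; simpl.
              eapply (sat_down _ (proj2_sig a)); [exact Ht|apply meet_lb2|apply meet_lb2].
           ++ destruct s as [s1 s2], t as [t1 t2]; unfold pm; simpl.
              eapply (sat_down _ (proj2_sig D)); [exact Hs|apply meet_lb1|apply meet_lb1].
    + intro H. apply (jc_min (Punion (fun y : PC => exists s : PC, S s /\ y = Pmeet a s)) (fun z => proj1_sig a z /\ jc (Punion S) z)); auto.
      * apply sat_inter; [apply (proj2_sig a)| apply jc_sat].
      * intros w [D [[s [Hs ->]] [H1 H2]]]. split; auto. apply jc_incl; exists s; auto.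
Defined.

Definition dA (x : A) : PT -> Prop := fun z => fle (fst z) x.
Definition dB (y : B) : PT -> Prop := fun z => fle (snd z) y.

Lemma dA_dc x : dc (dA x).
Proof. intros a b a' b' H H1 H2; unfold dA in *; simpl in *; eapply fle_trans; eauto. Qed.
Lemma dB_dc y : dc (dB y).
Proof. intros a b a' b' H H1 H2; unfold dB in *; simpl in *; eapply fle_trans; eauto. Qed.

Definition pAf (x : A) : PBF := exist _ (jc (dA x)) (jc_sat _).
Definition pBf (y : B) : PBF := exist _ (jc (dB y)) (jc_sat _).

Lemma jc_mono (S T : PT -> Prop) : (forall z, S z -> T z) -> forall z, jc S z -> jc T z.
Proof. intros H; apply jc_min; [apply jc_sat|]. intros; apply jc_incl; auto. Qed.

Definition pA : LMap PBF A.
Proof.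
  refine {| lm := pAf |}.
  - apply PC_ext; intro z; simpl; split; auto. intros _; apply jc_incl; apply ftop_max.
  - intros a b; apply PC_ext; intro z; simpl; split.
    + intro H; split; revert z H; apply jc_mono; intros z Hz; unfold dA in *;
        (eapply fle_trans; [exact Hz| first [apply meet_lb1|apply meet_lb2]]).
    + intros [H1 H2]. rewrite <- (pm_idem z). apply (jmeet2 (dA a) (dA b)); auto using dA_dc.
      intros [s1 s2] [t1 t2] Hs Ht; apply jc_incl; unfold dA, pm in *; simpl in *.
      apply meet_mono; auto.
  - intros S; apply PC_ext; intros [x y]; simpl; split.
    + intro H. revert H. apply jc_min; [apply jc_sat|]. intros [x' y'] Hx; unfold dA in Hx; simpl in Hx.
      rewrite <- (le_meet _ _ Hx), fdistr. apply sat_jl; [apply jc_sat|].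
      intros w [s [Hs ->]]. apply jc_incl. exists (pAf s); split.
      * exists s; split; auto.
      * simpl; apply jc_incl; unfold dA; simpl; apply meet_lb2.
    + apply jc_min; [apply jc_sat|]. intros w [D [[s [Hs ->]] Hw]]. simpl in Hw. revert Hw.
      apply jc_mono. intros z Hz; unfold dA in *; eapply fle_trans; [exact Hz|apply fsup_ub; auto].
Defined.

Definition pB : LMap PBF B.
Proof.
  refine {| lm := pBf |}.
  - apply PC_ext; intro z; simpl; split; auto. intros _; apply jc_incl; apply ftop_max.
  - intros a b; apply PC_ext; intro z; simpl; split.
    + intro H; split; revert z H; apply jc_mono; intros z Hz; unfold dB in *;
        (eapply fle_trans; [exact Hz| first [apply meet_lb1|apply meet_lb2]]).
    + intros [H1 H2]. rewrite <- (pm_idem z). apply (jmeet2 (dB a) (dB b)); auto using dB_dc.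
      intros [s1 s2] [t1 t2] Hs Ht; apply jc_incl; unfold dB, pm in *; simpl in *.
      apply meet_mono; auto.
  - intros S; apply PC_ext; intros [x y]; simpl; split.
    + intro H. revert H. apply jc_min; [apply jc_sat|]. intros [x' y'] Hx; unfold dB in Hx; simpl in Hx.
      rewrite <- (le_meet _ _ Hx), fdistr. apply sat_jr; [apply jc_sat|].
      intros w [s [Hs ->]]. apply jc_incl. exists (pBf s); split.
      * exists s; split; auto.
      * simpl; apply jc_incl; unfold dB; simpl; apply meet_lb2.
    + apply jc_min; [apply jc_sat|]. intros w [D [[s [Hs ->]] Hw]]. simpl in Hw. revert Hw.
      apply jc_mono. intros z Hz; unfold dB in *; eapply fle_trans; [exact Hz|apply fsup_ub; auto].
Defined.

Lemma pAB_comm : lmap_eq (lcomp g pA) (lcomp q pB).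
Proof.
  intro c; simpl. apply PC_ext; simpl; split.
  - apply jc_min; [apply jc_sat|]. intros [x y] Hx; unfold dA in Hx; simpl in Hx.
    rewrite <- (le_meet _ _ Hx). apply sat_r2; [apply jc_sat|].
    apply jc_incl; unfold dB; simpl; apply meet_lb2.
  - apply jc_min; [apply jc_sat|]. intros [x y] Hy; unfold dB in Hy; simpl in Hy.
    rewrite <- (le_meet _ _ Hy). apply sat_r1; [apply jc_sat|].
    apply jc_incl; unfold dA; simpl; apply meet_lb2.
Qed.


Section Univ.
Variable W : Frame.
Variable a : LMap W A.
Variable b : LMap W B.
Hypothesis Hab : lmap_eq (lcomp g a) (lcomp q b).

Definition hset (D : PT -> Prop) : W -> Prop :=
  fun w => exists x y, D (x,y) /\ w = fmeet (a x) (b y).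
Definition hf (D : PBF) : W := fsup (hset (proj1_sig D)).

Lemma satw (w0 : W) : sat (fun z => fle (fmeet (a (fst z)) (b (snd z))) w0).
Proof.
  constructor; simpl.
  - intros x y x' y' H H1 H2. eapply fle_trans; [|exact H]. apply meet_mono; apply lm_mono; auto.
  - intros S y H. rewrite lm_sup. apply sup_meet_le. intros s [x [Hx ->]]. auto.
  - intros x S H. rewrite lm_sup. apply meet_sup_le. intros s [y [Hy ->]]. auto.
  - intros x y c H. rewrite lm_meet in *. pose proof (Hab c) as E; simpl in E. rewrite E in H.
    rewrite meet_assoc in H. rewrite (meet_comm (b (q c))) in H. exact H.
  - intros x y c H. rewrite lm_meet in *. pose proof (Hab c) as E; simpl in E. rewrite E.
    rewrite meet_assoc. rewrite (meet_comm (b (q c))). exact H.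
Qed.

Lemma hf_le (S : PT -> Prop) (w0 : W) :
  (forall x y, S (x,y) -> fle (fmeet (a x) (b y)) w0) ->
  forall D : PBF, (forall z, proj1_sig D z -> jc S z) -> fle (hf D) w0.
Proof.
  intros H D HD. unfold hf. apply fsup_le. intros s [x [y [Hxy ->]]].
  apply (jc_min S _ (satw w0)) with (w := (x,y)).
  - intros [x' y'] Hw; apply H; auto.
  - apply HD; auto.
Qed.

Lemma hf_mono (D E : PBF) : fle D E -> fle (hf D) (hf E).
Proof. intro H. apply fsup_mono. intros w [x [y [Hxy ->]]]. exists x, y; split; [apply H; exact Hxy|reflexivity]. Qed.

Lemma hf_ub (D : PBF) x y : proj1_sig D (x,y) -> fle (fmeet (a x) (b y)) (hf D).
Proof. intro H. apply fsup_ub. exists x, y; auto. Qed.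

Definition hmap : LMap W PBF.
Proof.
  refine {| lm := hf |}.
  - apply fle_antisym; [apply ftop_max|]. eapply fle_trans; [|apply (hf_ub _ ftop ftop)].
    + rewrite !lm_top, meet_top; apply fle_refl.
    + simpl; exact I.
  - intros D E. apply fle_antisym.
    + apply meet_glb'; apply hf_mono; intros z [H1 H2]; auto.
    + change (fle (fmeet (fsup (hset (proj1_sig D))) (fsup (hset (proj1_sig E)))) (hf (fmeet D E))).
      rewrite fdistr_r. apply fsup_le. intros s [s1 [[x [y [Hxy ->]]] ->]].
      rewrite fdistr. apply fsup_le. intros s [s2 [[x' [y' [Hxy' ->]]] ->]].
      eapply fle_trans; [|apply (hf_ub _ (fmeet x x') (fmeet y y'))].
      * rewrite !lm_meet. apply meet_glb'; apply meet_glb'.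
        -- eapply fle_trans; [apply meet_lb1|apply meet_lb1].
        -- eapply fle_trans; [apply meet_lb2|apply meet_lb1].
        -- eapply fle_trans; [apply meet_lb1|apply meet_lb2].
        -- eapply fle_trans; [apply meet_lb2|apply meet_lb2].
      * simpl; split.
        -- eapply (sat_down _ (proj2_sig D)); [exact Hxy|apply meet_lb1|apply meet_lb1].
        -- eapply (sat_down _ (proj2_sig E)); [exact Hxy'|apply meet_lb2|apply meet_lb2].
  - intros S. apply fle_antisym.
    + apply (hf_le (Punion S)).
      * intros x y [D [HD Hxy]]. eapply fle_trans; [apply (hf_ub D); exact Hxy|].
        apply fsup_ub. exists D; auto.
      * simpl; auto.
    + apply fsup_le. intros w [D [HD ->]]. apply hf_mono. intros z Hz; simpl. apply jc_incl. exists D; auto.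
Defined.

Lemma hmap_pA : lmap_eq (lcomp pA hmap) a.
Proof.
  intro x. simpl. apply fle_antisym.
  - apply (hf_le (dA x)); [|simpl; auto]. intros x' y Hx; unfold dA in Hx; simpl in Hx.
    eapply fle_trans; [apply meet_lb1|apply lm_mono; auto].
  - eapply fle_trans; [|apply (hf_ub _ x ftop)].
    + rewrite lm_top, meet_top; apply fle_refl.
    + simpl; apply jc_incl; unfold dA; apply fle_refl.
Qed.

Lemma hmap_pB : lmap_eq (lcomp pB hmap) b.
Proof.
  intro y. simpl. apply fle_antisym.
  - apply (hf_le (dB y)); [|simpl; auto]. intros x y' Hy; unfold dB in Hy; simpl in Hy.
    eapply fle_trans; [apply meet_lb2|apply lm_mono; auto].
  - eapply fle_trans; [|apply (hf_ub _ ftop y)].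
    + rewrite lm_top, top_meet; apply fle_refl.
    + simpl; apply jc_incl; unfold dB; apply fle_refl.
Qed.
End Univ.

Lemma decomp (D : PBF) :
  D = fsup (fun E => exists x y, proj1_sig D (x,y) /\ E = fmeet (pA x) (pB y)).
Proof.
  apply PC_ext; intro z; simpl; split.
  - intro H. apply jc_incl. exists (fmeet (pA (fst z)) (pB (snd z))). split.
    + exists (fst z), (snd z); destruct z; auto.
    + simpl; split; apply jc_incl; apply fle_refl.
  - apply (jc_min _ _ (proj2_sig D)). intros w [E [[x [y [Hxy ->]]] [H1 H2]]].
    simpl in H1, H2. rewrite <- (pm_idem w).
    assert (Hj : jc (fun z => fle (fst z) x /\ fle (snd z) y) (pm w w)).
    { apply (jmeet2 (dA x) (dB y)); auto using dB_dc.
      intros [s1 s2] [t1 t2] Hs Ht; apply jc_incl; unfold dA, dB, pm in *; simpl in *.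
      split; eapply fle_trans; [apply meet_lb1|exact Hs|apply meet_lb2|exact Ht]. }
    revert Hj. apply (jc_min _ _ (proj2_sig D)). intros [x' y'] [Hx Hy]. 
    eapply (sat_down _ (proj2_sig D)); eauto.
Qed.

Lemma PB_is_pullback : is_pullback g q pA pB.
Proof.
  split; [apply pAB_comm|]. intros W a b Hab. split.
  - exists (hmap W a b Hab); split; [apply hmap_pA|apply hmap_pB].
  - intros h h' H1 H2 D. rewrite (decomp D), !lm_sup. apply fsup_ext. intro w; split;
      intros [E [[x [y [Hxy ->]]] ->]]; exists (fmeet (pA x) (pB y)); (split; [exists x, y; auto|]);
      rewrite !lm_meet; assert (E1 : h (pA x) = h' (pA x)) by apply H1; assert (E2 : h (pB y) = h' (pB y)) by apply H2;
      rewrite E1, E2; reflexivity.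
Qed.

End PBC.
Arguments PBF {A B C} g q. Arguments pA {A B C} g q. Arguments pB {A B C} g q.
Arguments dA {A B} x _. Arguments dB {A B} y _.
Arguments jc {A B C} g q S _. Arguments sat {A B C} g q D.
Arguments jc_sat {A B C g q} S. Arguments jc_incl {A B C g q} S w _ D _ _.
Arguments jc_min {A B C g q} S D _ _ w _.
Arguments sat_down {A B C g q D} _ x y x' y' _ _ _.
Arguments sat_r1 {A B C g q D} _ x y c _.
Arguments sat_r2 {A B C g q D} _ x y c _.
Arguments sat_jl {A B C g q D} _ S y _.
Arguments sat_jr {A B C g q D} _ x S _.
Arguments PB_is_pullback {A B C} g q.

Section LeftAdj.
Variables B C : Frame.
Variable q : LMap B C.
Variable qs : B -> C.
Hypothesis Hadj : forall y c, fle (qs y) c <-> fle y (q c).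
Lemma qs_unit y : fle y (q (qs y)).
Proof. apply Hadj, fle_refl. Qed.
Lemma qs_mono y y' : fle y y' -> fle (qs y) (qs y').
Proof. intro H. apply Hadj. eapply fle_trans; [exact H|apply qs_unit]. Qed.
Lemma qs_sup (S : B -> Prop) : qs (fsup S) = fsup (fun c => exists y, S y /\ c = qs y).
Proof.
  apply fle_antisym.
  - apply Hadj. apply fsup_le. intros s Hs. apply Hadj. apply fsup_ub; exists s; auto.
  - apply fsup_le. intros c [y [Hy ->]]. apply qs_mono, fsup_ub; auto.
Qed.
Lemma qs_top_surj : is_surj q -> qs ftop = ftop.
Proof.
  intro Hs. apply Hs. rewrite lm_top. apply fle_antisym; [apply ftop_max|].
  apply qs_unit.
Qed.
End LeftAdj.

Section OpenStab.
Variables A B C : Frame.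
Variable g : LMap A C.
Variable q : LMap B C.
Variable qs : B -> C.
Hypothesis Hadj : forall y c, fle (qs y) c <-> fle y (q c).
Hypothesis Hfrob : forall y c, qs (fmeet y (q c)) = fmeet (qs y) c.

Definition pAs (D : PBF g q) : A :=
  fsup (fun w => exists x y, proj1_sig D (x,y) /\ w = fmeet x (g (qs y))).

Lemma satw' (w0 : A) : sat g q (fun z => fle (fmeet (fst z) (g (qs (snd z)))) w0).
Proof.
  constructor; simpl.
  - intros x y x' y' H H1 H2. eapply fle_trans; [|exact H]. apply meet_mono; auto.
    apply lm_mono. apply (qs_mono _ _ q qs Hadj); auto.
  - intros S y H. apply sup_meet_le. auto.
  - intros x S y. rewrite (qs_sup _ _ _ _ Hadj), lm_sup. apply meet_sup_le. intros s [c [[y' [Hy' ->]] ->]]. auto.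
  - intros x y c H. rewrite Hfrob, lm_meet. rewrite <- meet_assoc, meet_rcomm. exact H.
  - intros x y c H. rewrite Hfrob, lm_meet in H. rewrite <- meet_assoc, meet_rcomm in H. exact H.
Qed.

Lemma pAs_adj (D : PBF g q) (w : A) : fle (pAs D) w <-> fle D (pA g q w).
Proof.
  split.
  - intros H [x y] Hxy. simpl.
    assert (H1 : fle (fmeet x (g (qs y))) w) by (eapply fle_trans; [|exact H]; apply fsup_ub; exists x, y; auto).
    assert (H2 : jc g q (dA w) (fmeet x (g (qs y)), y)) by (apply jc_incl; exact H1).
    apply (sat_r1 (jc_sat _)) in H2.
    refine (sat_down (jc_sat _) _ _ _ _ H2 (fle_refl _) _).
    apply meet_glb'; [apply fle_refl|apply (qs_unit _ _ _ _ Hadj)].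
  - intro H. apply fsup_le. intros s [x [y [Hxy ->]]].
    specialize (H _ Hxy). simpl in H. revert H.
    apply (jc_min _ _ (satw' w)). intros [x' y'] Hx; unfold dA in Hx; simpl in *.
    eapply fle_trans; [apply meet_lb1|exact Hx].
Qed.

Lemma pAs_frob (D : PBF g q) (w : A) : pAs (fmeet D (pA g q w)) = fmeet (pAs D) w.
Proof.
  apply fle_antisym.
  - apply meet_glb'.
    + apply fsup_mono. intros s [x [y [[Hxy _] ->]]]. exists x, y; auto.
    + apply pAs_adj. intros z [_ Hz]; exact Hz.
  - unfold pAs at 1. rewrite fdistr_r. apply fsup_le. intros s [s' [[x [y [Hxy ->]]] ->]].
    eapply fle_trans; [|apply fsup_ub; exists (fmeet x w), y; split; [|reflexivity]].
    + rewrite meet_rcomm; apply fle_refl.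
    + simpl; split.
      * eapply (sat_down (proj2_sig D)); [exact Hxy|apply meet_lb1|apply fle_refl].
      * apply jc_incl. unfold dA; simpl; apply meet_lb2.
Qed.

Lemma pAs_sec : qs ftop = ftop -> forall w, pAs (pA g q w) = w.
Proof.
  intros Ht w. apply fle_antisym.
  - apply pAs_adj, fle_refl.
  - eapply fle_trans; [|apply fsup_ub; exists w, ftop; split; [|reflexivity]].
    + rewrite Ht, lm_top, meet_top; apply fle_refl.
    + simpl; apply jc_incl; unfold dA; apply fle_refl.
Qed.
End OpenStab.
Arguments pAs {A B C} g q qs D. Arguments pAs_adj {A B C} g q qs _ _ D w.
Arguments pAs_frob {A B C} g q qs _ _ D w. Arguments pAs_sec {A B C} g q qs _ _ _ w.

Lemma PB_open_surj (A B C : Frame) (g : LMap A C) (q : LMap B C) :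
  is_open_surj q -> is_open_surj (pA g q).
Proof.
  intros [[qs [Hadj Hfrob]] Hs]. split.
  - exists (pAs g q qs). split; [apply pAs_adj; auto| apply pAs_frob; auto].
  - intros a b E. rewrite <- (pAs_sec g q qs Hadj Hfrob (qs_top_surj _ _ q qs Hadj Hs) a), E.
    apply pAs_sec; auto. apply (qs_top_surj _ _ q qs Hadj Hs).
Qed.

Lemma descent (Y Z T : Frame) (q : LMap Y Z) (h : LMap Y T) :
  is_open_surj q ->
  lmap_eq (lcomp h (pA q q)) (lcomp h (pB q q)) ->
  exists hb : LMap Z T, lmap_eq (lcomp hb q) h.
Proof.
  intros [[qs [Hadj Hfrob]] Hs] Hh.
  assert (Hfix : forall t, q (qs (h t)) = h t).
  { intro t. apply fle_antisym; [|apply (qs_unit _ _ _ _ Hadj)].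
    set (v := h t).
    assert (E : pA q q v = pB q q v) by apply Hh.
    apply fle_trans with (pAs q q qs (pB q q v)).
    - eapply fle_trans; [|apply fsup_ub; exists ftop, v; split; [|reflexivity]].
      + rewrite top_meet; apply fle_refl.
      + simpl; apply jc_incl; unfold dB; apply fle_refl.
    - rewrite <- E. apply pAs_adj; auto. apply fle_refl. }
  assert (Htop := qs_top_surj _ _ q qs Hadj Hs).
  unshelve refine (ex_intro _ (@Build_LMap Z T (fun t : T => qs (h t)) _ _ _) _); simpl.
  - rewrite lm_top; exact Htop.
  - intros a b. rewrite lm_meet, <- (Hfix b), Hfrob, Hfix. reflexivity.
  - intros S. rewrite lm_sup, (qs_sup _ _ _ _ Hadj). apply fsup_ext. intro c; split.
    + intros [y [[s [Hs' ->]] ->]]. exists s; auto.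
    + intros [s [Hs' ->]]. exists (h s); split; auto. exists s; auto.
  - intro t; simpl. apply Hfix.
Qed.

Lemma pb_sig {X Y Z P : Frame} {f : LMap X Z} {g : LMap Y Z} {p1 : LMap P X} {p2 : LMap P Y}
  (H : is_pullback f g p1 p2) {W : Frame} (a : LMap W X) (b : LMap W Y) :
  lmap_eq (lcomp f a) (lcomp g b) ->
  { h : LMap W P | lmap_eq (lcomp p1 h) a /\ lmap_eq (lcomp p2 h) b }.
Proof.
  intro Hab. apply constructive_indefinite_description. exact (proj1 (proj2 H W a b Hab)).
Qed.

Lemma pb_uniq {X Y Z P : Frame} {f : LMap X Z} {g : LMap Y Z} {p1 : LMap P X} {p2 : LMap P Y}
  (H : is_pullback f g p1 p2) {W : Frame} (h h' : LMap W P) :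
  lmap_eq (lcomp p1 h) (lcomp p1 h') -> lmap_eq (lcomp p2 h) (lcomp p2 h') -> lmap_eq h h'.
Proof.
  intros H1 H2. destruct H as [Hc HU].
  assert (Hab : lmap_eq (lcomp f (lcomp p1 h')) (lcomp g (lcomp p2 h'))).
  { intro z. pose proof (Hc z) as E. simpl in *. rewrite E. reflexivity. }
  exact (proj2 (HU W _ _ Hab) h h' H1 H2).
Qed.

Lemma pb_comm {X Y Z P : Frame} {f : LMap X Z} {g : LMap Y Z} {p1 : LMap P X} {p2 : LMap P Y}
  (H : is_pullback f g p1 p2) : forall z, p1 (f z) = p2 (g z).
Proof. intro z. exact (proj1 H z). Qed.

Ltac pw H := unfold lmap_eq in H; simpl in H.
Ltac pwg := let y := fresh "y" in intro y; simpl.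

Global Opaque pA pB.

Section IsoL.
Variable G : OpenGroupoid.
Variable N : Frame.
Variables Y Z : PrincipalBundle G N.
Variable phi : LMap (pb_sp Y) (pb_sp Z).
Hypothesis Hphi : equivariant phi.
Hypothesis Hpi : lmap_eq (lcomp (pb_proj Z) phi) (pb_proj Y).

Local Notation YL := (pb_loc Y).
Local Notation ZL := (pb_loc Z).
Local Notation piY := (pb_proj Y).
Local Notation piZ := (pb_proj Z).

Lemma uniqZ (W : Frame) (u u' : LMap W (adom ZL)) :
  lmap_eq (lcomp (act ZL) u) (lcomp (act ZL) u') ->
  lmap_eq (lcomp (ap2 ZL) u) (lcomp (ap2 ZL) u') -> lmap_eq u u'.
Proof.
  intros H1 H2.
  destruct (pb_pair_iso (PB_is_pullback piZ piZ)) as [cZ [Hc1 [Hc2 [eZ [He1 He2]]]]].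
  assert (E : lmap_eq (lcomp cZ u) (lcomp cZ u')).
  { apply (pb_uniq (PB_is_pullback piZ piZ)).
    - pw Hc1. pw H1. pwg. rewrite Hc1. apply H1.
    - pw Hc2. pw H2. pwg. rewrite Hc2. apply H2. }
  pw E. pw He1. intro y. rewrite <- (He1 y). apply E.
Qed.

Lemma iso_phi : is_iso phi.
Proof.
  destruct Hphi as [Hphi1 Hphi2].
  pose proof (adom_pb YL) as HAY. pose proof (adom_pb ZL) as HAZ.
  pose proof (pb_comm HAY) as cAY. pose proof (pb_comm HAZ) as cAZ.
  pose proof (anchor_act YL) as aaY. pose proof (anchor_act ZL) as aaZ. pw aaY. pw aaZ.
  pose proof Hphi1 as Hp1. pw Hp1. pose proof Hpi as Hpi'. pw Hpi'.
  destruct (pb_pair_iso (PB_is_pullback piZ piZ)) as [cZ [Hc1 [Hc2 [eZ [He1 He2]]]]].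
  pw Hc1. pw Hc2. pw He1. pw He2.
  assert (eZa2 : forall z, eZ (ap2 ZL z) = pB piZ piZ z) by (intro z; rewrite <- Hc2, He2; reflexivity).
  assert (eZac : forall z, eZ (act ZL z) = pA piZ piZ z) by (intro z; rewrite <- Hc1, He2; reflexivity).
  set (w1 := pA piZ piY). set (w2 := pB piZ piY).
  pose proof (PB_is_pullback piZ piY) as HY'. pose proof (pb_comm HY') as cY'.
  destruct (pb_sig (PB_is_pullback piZ piZ) w1 (lcomp phi w2)) as [n [Hn1 Hn2]].
  { pwg. rewrite Hpi'. apply cY'. }
  pw Hn1. pw Hn2.
  set (delta := lcomp (ap1 ZL) (lcomp eZ n)).
  assert (Hdd : lmap_eq (lcomp (gd G) delta) (lcomp (anchor YL) w2)).
  { pwg. rewrite cAZ, eZa2, Hn2, Hp1. reflexivity. }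
  destruct (pb_sig HAY delta w2 Hdd) as [m [Hm1 Hm2]]. pw Hm1. pw Hm2.
  destruct (pb_sig HAZ (ap1 YL) (lcomp phi (ap2 YL))) as [kk [Hkk1 Hkk2]].
  { pwg. rewrite Hp1. apply cAY. }
  pose proof (Hphi2 kk Hkk1 Hkk2) as Heq. pw Heq. pw Hkk1. pw Hkk2.
  assert (HmZ : forall z, m (kk z) = n (eZ z)).
  { assert (E : lmap_eq (lcomp kk m) (lcomp eZ n)).
    { apply (pb_uniq HAZ).
      - pwg. rewrite Hkk1, Hm1. reflexivity.
      - pwg. rewrite Hkk2, Hm2, eZa2, Hn2. reflexivity. }
    exact E. }
  set (H := lcomp (act YL) m).
  assert (Hop : is_open_surj w1) by (apply PB_open_surj, pb_open_surj).
  assert (Hdesc : lmap_eq (lcomp H (pA w1 w1)) (lcomp H (pB w1 w1))).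
  { set (k1 := pA w1 w1). set (k2 := pB w1 w1).
    pose proof (pb_comm (PB_is_pullback w1 w1)) as cK. fold k1 k2 in cK.
    destruct (pb_pair_iso (PB_is_pullback piY piY)) as [cY [Hcy1 [Hcy2 [eY [Hey1 Hey2]]]]].
    pw Hcy1. pw Hcy2. pw Hey1. pw Hey2.
    assert (eYa2 : forall z, eY (ap2 YL z) = pB piY piY z) by (intro z; rewrite <- Hcy2, Hey2; reflexivity).
    assert (eYac : forall z, eY (act YL z) = pA piY piY z) by (intro z; rewrite <- Hcy1, Hey2; reflexivity).
    destruct (pb_sig (PB_is_pullback piY piY) (lcomp w2 k2) (lcomp w2 k1)) as [ny [Hny1 Hny2]].
    { pwg. rewrite <- cY'. symmetry. apply cK. }
    pw Hny1. pw Hny2.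
    set (mg := lcomp eY ny). set (gg := lcomp (ap1 YL) mg).
    destruct (pb_sig (G2_pb G) (lcomp delta k2) gg) as [h3 [Hh31 Hh32]].
    { pwg. rewrite cAZ, eZa2, Hn2, Hp1, <- aaY, eYac, Hny1. reflexivity. }
    pw Hh31. pw Hh32.
    assert (Hgm : forall y, h3 (gmul G (gd G y)) = k1 (w2 (anchor YL y))).
    { intro y. pose proof (@gd_mul G) as E. pw E. rewrite E, Hh32. simpl.
      rewrite cAY, eYa2, Hny2. reflexivity. }
    destruct (pb_sig HAY (lcomp (gmul G) h3) (lcomp w2 k1)) as [h4 [Hh41 Hh42]].
    { pwg. apply Hgm. }
    pw Hh41. pw Hh42.
    destruct (pb_sig HAZ (lcomp (gmul G) h3) (lcomp phi (lcomp w2 k1))) as [u1 [Hu11 Hu12]].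
    { pwg. rewrite Hp1. apply Hgm. }
    pw Hu11. pw Hu12.
    destruct (pb_sig HAZ gg (lcomp phi (lcomp w2 k1))) as [h1Z [Hz11 Hz12]].
    { pwg. unfold gg, mg; simpl. rewrite cAY, eYa2, Hny2, Hp1. reflexivity. }
    assert (Hh1Z : lmap_eq h1Z (lcomp kk mg)).
    { apply (pb_uniq HAZ).
      - pw Hz11. pwg. rewrite Hz11, Hkk1. reflexivity.
      - pw Hz12. pwg. rewrite Hz12, Hkk2. unfold mg; simpl. rewrite eYa2, Hny2. reflexivity. }
    pw Hh1Z.
    assert (R : lmap_eq (lcomp (act ZL) (lcomp eZ (lcomp n k2))) (lcomp (act ZL) u1)).
    { apply (@act_assoc G ZL _ (lcomp delta k2) gg (lcomp phi (lcomp w2 k1)) h1Z (lcomp eZ (lcomp n k2)) h3 u1);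
        try assumption; try (pwg; reflexivity).
      - pwg. rewrite eZa2, Hn2. rewrite Hh1Z. simpl. rewrite <- Heq. unfold mg; simpl.
        rewrite eYac, Hny1. reflexivity. }
    pw R.
    assert (U : lmap_eq u1 (lcomp eZ (lcomp n k1))).
    { apply uniqZ.
      - pwg. rewrite <- R. rewrite !eZac, !Hn1. symmetry; apply cK.
      - pwg. rewrite Hu12, eZa2, Hn2. reflexivity. }
    pw U.
    assert (E4 : lmap_eq h4 (lcomp m k1)).
    { apply (pb_uniq HAY).
      - pwg. rewrite Hh41, Hm1, <- U, Hu11. reflexivity.
      - pwg. rewrite Hh42, Hm2. reflexivity. }
    pw E4.
    assert (R2 : lmap_eq (lcomp (act YL) (lcomp m k2)) (lcomp (act YL) h4)).
    { apply (@act_assoc G YL _ (lcomp delta k2) gg (lcomp w2 k1) mg (lcomp m k2) h3 h4);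
        try assumption; try (pwg; reflexivity).
      - pwg. unfold mg; simpl. rewrite eYa2, Hny2. reflexivity.
      - pwg. rewrite Hm1. reflexivity.
      - pwg. rewrite Hm2. unfold mg; simpl. rewrite eYac, Hny1. reflexivity. }
    pw R2. pwg. unfold H; simpl. rewrite R2, E4. reflexivity. }
  destruct (descent _ _ _ w1 H Hop Hdesc) as [chi Hchi]. pw Hchi.
  exists chi. split.
  - destruct (pb_sig HY' phi (lid _)) as [j [Hj1 Hj2]].
    { pwg. apply Hpi'. }
    pw Hj1. pw Hj2.
    destruct (pb_sig HAZ (lcomp (gu G) (lcomp (anchor ZL) phi)) phi) as [v [Hv1 Hv2]].
    { pwg. pose proof (@gd_u G) as E. pw E. rewrite E. reflexivity. }
    assert (Hav : lmap_eq (lcomp (act ZL) v) phi) by (apply (@act_unit G ZL); assumption).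
    pw Hv1. pw Hv2. pw Hav.
    assert (U : lmap_eq (lcomp eZ (lcomp n j)) v).
    { apply uniqZ.
      - pwg. rewrite eZac, Hn1, Hav. apply Hj1.
      - pwg. rewrite eZa2, Hn2, Hv2. apply Hj2. }
    pw U.
    assert (E : lmap_eq (lcomp (act YL) (lcomp m j)) (lid _)).
    { apply (@act_unit G YL).
      - pwg. rewrite Hm1, U, Hv1, Hp1. reflexivity.
      - pwg. rewrite Hm2. apply Hj2. }
    pw E. pwg. rewrite <- Hj1. rewrite Hchi. unfold H; simpl. apply E.
  - pwg. apply (proj2 Hop). rewrite Hchi. unfold H; simpl.
    rewrite Heq, HmZ, eZac, Hn1. reflexivity.
Qed.
End IsoL.

Section XtC.
Variable G : OpenGroupoid.
Variables M Mt : Frame.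
Variable X : PrincipalBundle G M.
Variable f : LMap Mt M.
Local Notation XL := (pb_loc X).
Local Notation pi := (pb_proj X).
Local Notation p := (anchor XL).
Local Notation a1 := (ap1 XL).
Local Notation a2 := (ap2 XL).
Local Notation al := (act XL).

Variable T : Frame.
Variables (t1 : LMap T Mt) (t2 : LMap T (gl_sp XL)).
Hypothesis HT : is_pullback f pi t1 t2.
Hypothesis Hop : is_open_surj t1.
Variable At : Frame.
Variables (b1 : LMap At (G1 G)) (b2 : LMap At T).
Hypothesis HAt : is_pullback (gd G) (lcomp p t2) b1 b2.
Variable k : LMap At (adom XL).
Hypothesis Hk1 : lmap_eq (lcomp a1 k) b1.
Hypothesis Hk2 : lmap_eq (lcomp a2 k) (lcomp t2 b2).
Variable act_t : LMap At T.
Hypothesis Ha1 : lmap_eq (lcomp t1 act_t) (lcomp t1 b2).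
Hypothesis Ha2 : lmap_eq (lcomp t2 act_t) (lcomp al k).

Lemma anchor_act_t : lmap_eq (lcomp (lcomp p t2) act_t) (lcomp (gr G) b1).
Proof.
  pose proof Ha2 as E2. pw E2. pose proof Hk1 as E1. pw E1. pose proof (anchor_act XL) as aa. pw aa.
  pwg. rewrite E2, aa, E1. reflexivity.
Qed.

Lemma act_unit_t : forall (W : Frame) (x : LMap W T) (h : LMap W At),
      lmap_eq (lcomp b1 h) (lcomp (gu G) (lcomp (lcomp p t2) x)) ->
      lmap_eq (lcomp b2 h) x -> lmap_eq (lcomp act_t h) x.
Proof.
  intros W x h H1 H2. pose proof Ha1 as A1. pw A1. pose proof Ha2 as A2. pw A2.
  pose proof Hk1 as K1. pw K1. pose proof Hk2 as K2. pw K2.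
  assert (E : lmap_eq (lcomp al (lcomp k h)) (lcomp t2 x)).
  { apply (@act_unit G XL).
    - pw H1. pwg. rewrite K1, H1. reflexivity.
    - pw H2. pwg. rewrite K2, H2. reflexivity. }
  pw E. pw H2.
  apply (pb_uniq HT).
  - pwg. rewrite A1, H2. reflexivity.
  - pwg. rewrite A2, E. reflexivity.
Qed.

Lemma act_assoc_t : forall (W : Frame) (g kk : LMap W (G1 G)) (x : LMap W T)
      (h1 h2 : LMap W At) (h3 : LMap W (G2 G)) (h4 : LMap W At),
      lmap_eq (lcomp b1 h1) kk -> lmap_eq (lcomp b2 h1) x ->
      lmap_eq (lcomp b1 h2) g -> lmap_eq (lcomp b2 h2) (lcomp act_t h1) ->
      lmap_eq (lcomp (gp1 G) h3) g -> lmap_eq (lcomp (gp2 G) h3) kk ->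
      lmap_eq (lcomp b1 h4) (lcomp (gmul G) h3) -> lmap_eq (lcomp b2 h4) x ->
      lmap_eq (lcomp act_t h2) (lcomp act_t h4).
Proof.
  intros W g kk x h1 h2 h3 h4 C1 C2 C3 C4 C5 C6 C7 C8.
  pose proof Ha1 as A1. pw A1. pose proof Ha2 as A2. pw A2.
  pose proof Hk1 as K1. pw K1. pose proof Hk2 as K2. pw K2.
  assert (E : lmap_eq (lcomp al (lcomp k h2)) (lcomp al (lcomp k h4))).
  { apply (@act_assoc G XL _ g kk (lcomp t2 x) (lcomp k h1) (lcomp k h2) h3 (lcomp k h4)); try assumption.
    - pw C1. pwg. rewrite K1, C1. reflexivity.
    - pw C2. pwg. rewrite K2, C2. reflexivity.
    - pw C3. pwg. rewrite K1, C3. reflexivity.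
    - pw C4. pwg. rewrite K2, C4, A2. reflexivity.
    - pw C7. pwg. rewrite K1, C7. reflexivity.
    - pw C8. pwg. rewrite K2, C8. reflexivity. }
  pw E. pw C2. pw C4. pw C8.
  apply (pb_uniq HT).
  - pwg. rewrite !A1, C4, A1, C2, C8. reflexivity.
  - pwg. rewrite !A2. apply E.
Qed.

Definition XtL : GLocale G :=
  {| gl_sp := T; anchor := lcomp p t2; adom := At; ap1 := b1; ap2 := b2; adom_pb := HAt;
     act := act_t; anchor_act := anchor_act_t; act_unit := act_unit_t; act_assoc := act_assoc_t |}.

Lemma pair_iso_t : forall (P : Frame) (q1 q2 : LMap P T),
      is_pullback t1 t1 q1 q2 ->
      exists c : LMap At P,
        lmap_eq (lcomp q1 c) act_t /\ lmap_eq (lcomp q2 c) b2 /\ is_iso c.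
Proof.
  intros P q1 q2 HP.
  pose proof Ha1 as A1. pw A1. pose proof Ha2 as A2. pw A2.
  pose proof Hk1 as K1. pw K1. pose proof Hk2 as K2. pw K2.
  pose proof (adom_pb XL) as HAX. pose proof (pb_comm HAX) as cAX.
  pose proof (pb_comm HT) as cT. pose proof (pb_comm HP) as cP.
  destruct (pb_pair_iso (PB_is_pullback pi pi)) as [cX [Hc1 [Hc2 [eX [He1 He2]]]]].
  pw Hc1. pw Hc2. pw He1. pw He2.
  assert (eXa2 : forall z, eX (a2 z) = pB pi pi z) by (intro z; rewrite <- Hc2, He2; reflexivity).
  assert (eXac : forall z, eX (al z) = pA pi pi z) by (intro z; rewrite <- Hc1, He2; reflexivity).
  destruct (pb_sig HP act_t b2 Ha1) as [c [Hcc1 Hcc2]].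
  destruct (pb_sig (PB_is_pullback pi pi) (lcomp t2 q1) (lcomp t2 q2)) as [n [Hn1 Hn2]].
  { pwg. rewrite <- !cT. apply cP. }
  pw Hn1. pw Hn2.
  destruct (pb_sig HAt (lcomp a1 (lcomp eX n)) q2) as [e [He3 He4]].
  { pwg. rewrite cAX, eXa2, Hn2. reflexivity. }
  pw He3. pw He4.
  exists c. split; [exact Hcc1|]. split; [exact Hcc2|].
  pw Hcc1. pw Hcc2.
  assert (Hnc : lmap_eq (lcomp n c) (lcomp cX k)).
  { apply (pb_uniq (PB_is_pullback pi pi)).
    - pwg. rewrite Hn1, Hcc1, Hc1, A2. reflexivity.
    - pwg. rewrite Hn2, Hcc2, Hc2, K2. reflexivity. }
  pw Hnc.
  assert (Hke : lmap_eq (lcomp k e) (lcomp eX n)).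
  { apply (pb_uniq HAX).
    - pwg. rewrite K1, He3. reflexivity.
    - pwg. rewrite K2, He4, eXa2, Hn2. reflexivity. }
  pw Hke.
  exists e. split.
  - apply (pb_uniq HAt).
    + pwg. rewrite He3, Hnc, He1, K1. reflexivity.
    + pwg. rewrite He4, Hcc2. reflexivity.
  - assert (Hae : lmap_eq (lcomp act_t e) q1).
    { apply (pb_uniq HT).
      - pwg. rewrite A1, He4. symmetry; apply cP.
      - pwg. rewrite A2, Hke, eXac, Hn1. reflexivity. }
    pw Hae.
    apply (pb_uniq HP).
    + pwg. rewrite Hcc1, Hae. reflexivity.
    + pwg. rewrite Hcc2, He4. reflexivity.
Qed.

Definition Xt : PrincipalBundle G Mt :=
  {| pb_loc := XtL; pb_proj := t1; pb_inv := Ha1; pb_pair_iso := pair_iso_t; pb_open_surj := Hop |}.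

Lemma equiv_t2 : equivariant (X := XtL) (Y := XL) t2.
Proof.
  split.
  - intro y; reflexivity.
  - intros kk H1 H2. simpl in *. pose proof Ha2 as A2. pw A2.
    assert (E : lmap_eq k kk).
    { apply (pb_uniq (adom_pb XL)).
      - pw H1. pose proof Hk1 as K1. pw K1. pwg. rewrite K1, H1. reflexivity.
      - pw H2. pose proof Hk2 as K2. pw K2. pwg. rewrite K2, H2. reflexivity. }
    pw E. pwg. rewrite A2, E. reflexivity.
Qed.

Lemma univ_t : forall (X' : PrincipalBundle G Mt) (f' : LMap (pb_sp X') (pb_sp X)),
      equivariant f' ->
      lmap_eq (lcomp (pb_proj X) f') (lcomp f (pb_proj X')) ->
      exists phi : LMap (pb_sp X') (pb_sp Xt),
        (equivariant phi /\ is_iso phi /\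
         lmap_eq (lcomp (pb_proj Xt) phi) (pb_proj X') /\
         lmap_eq (lcomp t2 phi) f') /\
        forall psi : LMap (pb_sp X') (pb_sp Xt),
          equivariant psi -> is_iso psi ->
          lmap_eq (lcomp (pb_proj Xt) psi) (pb_proj X') ->
          lmap_eq (lcomp t2 psi) f' ->
          lmap_eq psi phi.
Proof.
  intros X' f' [Hf1 Hf2] Hf.
  destruct (pb_sig HT (pb_proj X') f') as [phi [Hp1 Hp2]].
  { intro y. symmetry. apply Hf. }
  assert (Heq : equivariant (X := pb_loc X') (Y := XtL) phi).
  { pose proof Ha1 as A1. pw A1. pose proof Ha2 as A2. pw A2.
    pose proof Hk1 as K1. pw K1. pose proof Hk2 as K2. pw K2.
    pose proof Hp1 as P1. pw P1. pose proof Hp2 as P2. pw P2.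
    split.
    - pw Hf1. pwg. rewrite P2. apply Hf1.
    - intros kk H1 H2. simpl in *.
      assert (E : lmap_eq (lcomp f' (act (pb_loc X'))) (lcomp al (lcomp k kk))).
      { apply Hf2.
        - pw H1. pwg. rewrite K1, H1. reflexivity.
        - pw H2. pwg. rewrite K2, H2, P2. reflexivity. }
      pw E. pw H2.
      apply (pb_uniq HT).
      + pwg. rewrite P1, A1, H2, P1. pose proof (pb_inv X') as I. pw I. apply I.
      + pwg. rewrite P2, A2. apply E. }
  exists phi. split.
  - split; [exact Heq|]. split; [|split; [exact Hp1|exact Hp2]].
    apply (@iso_phi G Mt X' Xt phi Heq Hp1).
  - intros psi _ _ H1 H2. apply (pb_uniq HT).
    + pw H1. pose proof Hp1 as P1. pw P1. pwg. rewrite H1, P1. reflexivity.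
    + pw H2. pose proof Hp2 as P2. pw P2. pwg. rewrite H2, P2. reflexivity.
Qed.
End XtC.

Theorem lemma3p2 (G : OpenGroupoid) (M Mt : Frame) (X : PrincipalBundle G M)
    (f : LMap Mt M) :
  exists (Xt : PrincipalBundle G Mt) (ft : LMap (pb_sp Xt) (pb_sp X)),
    equivariant ft /\
    lmap_eq (lcomp (pb_proj X) ft) (lcomp f (pb_proj Xt)) /\
    forall (X' : PrincipalBundle G Mt) (f' : LMap (pb_sp X') (pb_sp X)),
      equivariant f' ->
      lmap_eq (lcomp (pb_proj X) f') (lcomp f (pb_proj X')) ->
      exists phi : LMap (pb_sp X') (pb_sp Xt),
        (equivariant phi /\ is_iso phi /\
         lmap_eq (lcomp (pb_proj Xt) phi) (pb_proj X') /\
         lmap_eq (lcomp ft phi) f') /\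
        forall psi : LMap (pb_sp X') (pb_sp Xt),
          equivariant psi -> is_iso psi ->
          lmap_eq (lcomp (pb_proj Xt) psi) (pb_proj X') ->
          lmap_eq (lcomp ft psi) f' ->
          lmap_eq psi phi.
Proof.
  set (pi := pb_proj X).
  set (t1 := pA f pi). set (t2 := pB f pi).
  pose proof (PB_is_pullback f pi) as HT.
  pose proof (PB_open_surj _ _ _ f pi (pb_open_surj X)) as Hop.
  set (p := anchor (pb_loc X)).
  set (b1 := pA (gd G) (lcomp p t2)). set (b2 := pB (gd G) (lcomp p t2)).
  pose proof (PB_is_pullback (gd G) (lcomp p t2)) as HAt.
  destruct (pb_sig (adom_pb (pb_loc X)) b1 (lcomp t2 b2)) as [k [Hk1 Hk2]].
  { intro y. apply (pb_comm HAt). }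
  destruct (pb_sig HT (lcomp t1 b2) (lcomp (act (pb_loc X)) k)) as [act_t [Ha1 Ha2]].
  { pose proof Hk2 as K2. pw K2. pose proof (pb_inv X) as I. pw I.
    pose proof (pb_comm HT) as cT. pwg. rewrite cT. fold pi. rewrite I, K2. reflexivity. }
  exists (Xt G M Mt X f _ t1 t2 HT Hop _ b1 b2 HAt k Hk1 Hk2 act_t Ha1 Ha2), t2.
  split; [exact (equiv_t2 G M Mt X f _ t1 t2 HT _ b1 b2 HAt k Hk1 Hk2 act_t Ha1 Ha2)|].
  split.
  - intro y. symmetry. apply (pb_comm HT).
  - exact (univ_t G M Mt X f _ t1 t2 HT Hop _ b1 b2 HAt k Hk1 Hk2 act_t Ha1 Ha2).
Qed.
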